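(* Let $X$ be a Hausdorff space and define $\Phi(X)=\sup\{L(X\setminus\{x\}) : x\in X\}$. Then $\Phi(X)=L(X)\cdot\psi(X)$.
   Context: $L(Y)$ denotes the Lindelöf number of $Y$ (least infinite cardinal $\mu$ such that every open cover of $Y$ has a subcover of size at most $\mu$), and $\psi(Y)$ the pseudocharacter (least infinite $\mu$ such that every point of $Y$ is the intersection of at most $\mu$ open sets); $X\setminus\{x\}$ carries the subspace topology. All cardinal functions are taken to be infinite. *)

(* Defs.v *)
From Stdlib Require Import Classical.

Definition is_topology {T : Type} (op : (T -> Prop) -> Prop) : Prop :=
  op (fun _ => True) /\
  op (fun _ => False) /\
  (forall U V, op U -> op V -> op (fun x => U x /\ V x)) /\
  (forall F : (T -> Prop) -> Prop,
      (forall U, F U -> op U) -> op (fun x => exists U, F U /\ U x)).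

Definition hausdorff {T : Type} (op : (T -> Prop) -> Prop) : Prop :=
  forall x y : T, x <> y ->
    exists U V, op U /\ op V /\ U x /\ V y /\ (forall z, U z -> V z -> False).

Definition subspace_open {T : Type} (op : (T -> Prop) -> Prop) (A : T -> Prop)
  : ({x : T | A x} -> Prop) -> Prop :=
  fun W => exists U, op U /\ forall y : {x : T | A x}, W y <-> U (proj1_sig y).

Definition fam_card_le {T : Type} (D : (T -> Prop) -> Prop) (K : Type) : Prop :=
  exists f : {U : T -> Prop | D U} -> K, forall a b, f a = f b -> a = b.

Definition infinite_type (K : Type) : Prop :=
  exists g : nat -> K, forall m n, g m = g n -> m = n.

Definition lindelof_le {T : Type} (op : (T -> Prop) -> Prop) (K : Type) : Prop :=
  forall C : (T -> Prop) -> Prop,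
    (forall U, C U -> op U) -> (forall x, exists U, C U /\ U x) ->
    exists D : (T -> Prop) -> Prop,
      (forall U, D U -> C U) /\ (forall x, exists U, D U /\ U x) /\ fam_card_le D K.

Definition pseudochar_le {T : Type} (op : (T -> Prop) -> Prop) (K : Type) : Prop :=
  forall x : T,
    exists D : (T -> Prop) -> Prop,
      (forall U, D U -> op U /\ U x) /\
      (forall y, (forall U, D U -> U y) -> y = x) /\ fam_card_le D K.

(* Main.v *)
Require Import Defs.
From Stdlib Require Import Classical ClassicalEpsilon FunctionalExtensionality PropExtensionality ProofIrrelevance Cantor.

Definition sub {U : Type} (A B : U -> Prop) := forall u, A u -> B u.
Definition bigU {U : Type} (ch : (U -> Prop) -> Prop) : U -> Prop :=
  fun u => exists S, ch S /\ S u.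

Lemma set_ext {U : Type} (A B : U -> Prop) : sub A B -> sub B A -> A = B.
Proof.
  intros H1 H2. apply functional_extensionality; intro u.
  apply propositional_extensionality; split; auto.
Qed.

Inductive tower {U : Type} (g : (U -> Prop) -> (U -> Prop)) : (U -> Prop) -> Prop :=
| tw_g : forall M, tower g M -> tower g (g M)
| tw_u : forall ch, (forall S, ch S -> tower g S) -> tower g (bigU ch).

Definition extreme {U : Type} (g : (U -> Prop) -> (U -> Prop)) (c : U -> Prop) :=
  forall t, tower g t -> sub t c -> ~ sub c t -> sub (g t) c.

Lemma tw_lemma1 {U : Type} (g : (U -> Prop) -> (U -> Prop)) (Hg : forall M, sub M (g M))
  c : extreme g c -> forall t, tower g t -> sub t c \/ sub (g c) t.
Proof.
  intros Ec t Ht. induction Ht as [s Hs IH | ch Hch IH].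
  - destruct IH as [H | H].
    + destruct (classic (sub c s)) as [H2 | H2].
      * right. rewrite (set_ext s c H H2). intros u hu; exact hu.
      * left. apply Ec; auto.
    + right. intros u hu. apply Hg. auto.
  - destruct (classic (exists S, ch S /\ sub (g c) S)) as [[S [HS H]] | H].
    + right. intros u hu. exists S. split; auto.
    + left. intros u [S [HS hu]]. destruct (IH S HS) as [H1 | H1]; auto.
      exfalso. apply H. exists S. auto.
Qed.

Lemma tw_lemma2 {U : Type} (g : (U -> Prop) -> (U -> Prop)) (Hg : forall M, sub M (g M))
  c : tower g c -> extreme g c.
Proof.
  intro Hc. induction Hc as [s Hs IH | ch Hch IH].
  - intros t Ht H1 H2. destruct (tw_lemma1 g Hg s IH t Ht) as [H | H].
    + destruct (classic (sub s t)) as [H3 | H3].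
      * rewrite (set_ext t s H H3). intros u hu; exact hu.
      * intros u hu. apply Hg. apply (IH t Ht H H3). auto.
    + exfalso; auto.
  - intros t Ht H1 H2.
    destruct (classic (exists S, ch S /\ sub t S /\ ~ sub S t)) as [[S [HS [Ha Hb]]] | H].
    + intros u hu. exists S. split; auto. apply (IH S HS t Ht Ha Hb). auto.
    + exfalso. apply H2. intros u [S [HS hu]].
      destruct (tw_lemma1 g Hg S (IH S HS) t Ht) as [H3 | H3].
      * destruct (classic (sub S t)) as [H4 | H4]; auto.
        exfalso; apply H; eauto.
      * apply H3. apply Hg. auto.
Qed.

Lemma tw_total {U : Type} (g : (U -> Prop) -> (U -> Prop)) (Hg : forall M, sub M (g M))
  a b : tower g a -> tower g b -> sub a b \/ sub b a.
Proof.
  intros Ha Hb. destruct (tw_lemma1 g Hg a (tw_lemma2 g Hg a Ha) b Hb) as [H | H]; auto.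
  left. intros u hu. apply H, Hg, hu.
Qed.

Lemma zorn {U : Type} (P : (U -> Prop) -> Prop) :
  (forall ch, (forall S, ch S -> P S) ->
     (forall S1 S2, ch S1 -> ch S2 -> sub S1 S2 \/ sub S2 S1) -> P (bigU ch)) ->
  exists M, P M /\ forall Q, P Q -> sub M Q -> sub Q M.
Proof.
  intro Hch. apply NNPP; intro Hno.
  assert (Hex : forall M, exists Q, sub M Q /\ (P M -> P Q /\ ~ sub Q M)).
  { intro M. destruct (classic (P M)) as [HP | HP].
    - destruct (classic (exists Q, P Q /\ sub M Q /\ ~ sub Q M)) as [[Q [h1 [h2 h3]]] | H].
      + exists Q; auto.
      + exfalso. apply Hno. exists M. split; auto. intros Q HQ HMQ.
        apply NNPP; intro h. apply H. eauto.
    - exists M. split. intros u hu; auto. intro; contradiction. }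
  set (g := fun M => epsilon (inhabits M) (fun Q => sub M Q /\ (P M -> P Q /\ ~ sub Q M))).
  assert (Hg : forall M, sub M (g M) /\ (P M -> P (g M) /\ ~ sub (g M) M)).
  { intro M. exact (epsilon_spec (inhabits M) _ (Hex M)). }
  assert (Hg1 : forall M, sub M (g M)) by (intro M; apply Hg).
  assert (HP : forall t, tower g t -> P t).
  { intros t Ht. induction Ht as [s Hs IH | ch H IH].
    - apply Hg; auto.
    - apply Hch; auto. intros; apply (tw_total g); auto. }
  set (m := bigU (tower g)).
  assert (Hm : tower g m) by (apply tw_u; auto).
  destruct (Hg m) as [_ H]. destruct (H (HP m Hm)) as [_ H2]. apply H2.
  intros u hu. exists (g m). split; auto. apply tw_g; auto.
Qed.

Definition injective {A B : Type} (f : A -> B) := forall a b, f a = f b -> a = b.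

Lemma compar (X Y : Type) :
  (exists f : X -> Y, injective f) \/ (exists h : Y -> X, injective h).
Proof.
  set (P := fun R : X * Y -> Prop => forall p q, R p -> R q -> (fst p = fst q <-> snd p = snd q)).
  destruct (zorn P) as [M [HM Hmax]].
  { intros ch Hch Htot p q [S1 [h1 p1]] [S2 [h2 q2]].
    destruct (Htot S1 S2 h1 h2) as [H | H].
    - apply (Hch S2 h2); auto.
    - apply (Hch S1 h1); auto. }
  destruct (classic (forall x, exists y, M (x, y))) as [Hx | Hx].
  - left. exists (fun x => proj1_sig (constructive_indefinite_description _ (Hx x))).
    intros a b E.
    destruct (constructive_indefinite_description _ (Hx a)) as [ya Ha].
    destruct (constructive_indefinite_description _ (Hx b)) as [yb Hb].
    simpl in E. subst. apply (HM _ _ Ha Hb). reflexivity.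
  - destruct (classic (forall y, exists x, M (x, y))) as [Hy | Hy].
    + right. exists (fun y => proj1_sig (constructive_indefinite_description _ (Hy y))).
      intros a b E.
      destruct (constructive_indefinite_description _ (Hy a)) as [xa Ha].
      destruct (constructive_indefinite_description _ (Hy b)) as [xb Hb].
      simpl in E. subst. apply (HM _ _ Ha Hb). reflexivity.
    + exfalso. apply not_all_ex_not in Hx as [x0 Hx0].
      apply not_all_ex_not in Hy as [y0 Hy0].
      set (Q := fun p => M p \/ p = (x0, y0)).
      assert (HQ : P Q).
      { intros p q [Hp | Hp] [Hq | Hq]; subst; simpl.
        - apply HM; auto.
        - destruct p as [x y]; simpl. split; intro E; subst.
          + exfalso; apply Hx0; eauto.
          + exfalso; apply Hy0; eauto.
        - destruct q as [x y]; simpl. split; intro E; subst.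
          + exfalso; apply Hx0; eauto.
          + exfalso; apply Hy0; eauto.
        - tauto. }
      assert (H := Hmax Q HQ (fun u hu => or_introl hu) (x0, y0) (or_intror eq_refl)).
      apply Hx0. eauto.
Qed.

Definition Dom {K : Type} (R : (K * K) * K -> Prop) (a : K) := exists c, R ((a, a), c).

Definition Good {K : Type} (g : nat -> K) (R : (K * K) * K -> Prop) :=
  (forall a b c c', R ((a, b), c) -> R ((a, b), c') -> c = c') /\
  (forall a b c a' b', R ((a, b), c) -> R ((a', b'), c) -> a = a' /\ b = b') /\
  (forall a b c, R ((a, b), c) -> Dom R a /\ Dom R b /\ Dom R c) /\
  (forall a b, Dom R a -> Dom R b -> exists c, R ((a, b), c)) /\
  (forall n, Dom R (g n)).

Lemma good_union {K : Type} (g : nat -> K) (ch : ((K * K) * K -> Prop) -> Prop) :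
  (forall S, ch S -> Good g S \/ (forall u, ~ S u)) ->
  (forall S1 S2, ch S1 -> ch S2 -> sub S1 S2 \/ sub S2 S1) ->
  Good g (bigU ch) \/ (forall u, ~ bigU ch u).
Proof.
  intros Hch Htot.
  assert (HG : forall S u, ch S -> S u -> Good g S).
  { intros S u hS hu. destruct (Hch S hS) as [H|H]; auto. exfalso; eapply H; eauto. }
  assert (Hmono : forall S a, ch S -> Dom S a -> Dom (bigU ch) a).
  { intros S a hS [c hc]. exists c, S; auto. }
  assert (Hboth : forall u v, bigU ch u -> bigU ch v -> exists S, ch S /\ S u /\ S v).
  { intros u v [S1 [h1 u1]] [S2 [h2 v2]]. destruct (Htot S1 S2 h1 h2) as [H|H].
    - exists S2; auto. - exists S1; auto. }
  destruct (classic (exists u, bigU ch u)) as [[u0 Hu0] | Hn].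
  2:{ right. intros u hu; apply Hn; eauto. }
  left. destruct Hu0 as [S0 [hS0 hu0]].
  split; [|split; [|split; [|split]]].
  - intros a b c c' h1 h2. destruct (Hboth _ _ h1 h2) as [S [hS [x1 x2]]].
    destruct (HG S _ hS x1) as [F _]. eauto.
  - intros a b c a' b' h1 h2. destruct (Hboth _ _ h1 h2) as [S [hS [x1 x2]]].
    destruct (HG S _ hS x1) as [_ [F _]]. eauto.
  - intros a b c [S [hS h]]. destruct (HG S _ hS h) as [_ [_ [F _]]].
    destruct (F _ _ _ h) as [d1 [d2 d3]]. repeat split; eapply Hmono; eauto.
  - intros a b [c1 h1] [c2 h2]. destruct (Hboth _ _ h1 h2) as [S [hS [x1 x2]]].
    destruct (HG S _ hS x1) as [_ [_ [_ [F _]]]].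
    destruct (F a b) as [c hc]. exists c1; auto. exists c2; auto.
    exists c, S; auto.
  - intro n. destruct (HG S0 _ hS0 hu0) as [_ [_ [_ [_ F]]]]. eapply Hmono; eauto.
Qed.

Lemma final_case {K : Type} (g : nat -> K) (Hg : injective g) (M : (K * K) * K -> Prop)
  (GM : Good g M) (J : K -> K)
  (HJ1 : forall k, ~ Dom M k -> Dom M (J k))
  (HJ2 : forall k k', ~ Dom M k -> ~ Dom M k' -> J k = J k' -> k = k') :
  exists F : K * K -> K, injective F.
Proof.
  destruct GM as [Gf [Gi [Gc [Gt Gn]]]].
  set (ER := fun k x => (Dom M k /\ M ((g 0, k), x)) \/ (~ Dom M k /\ M ((g 1, J k), x))).
  assert (ERex : forall k, exists x, ER k x).
  { intro k. destruct (classic (Dom M k)) as [h|h].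
    - destruct (Gt (g 0) k (Gn 0) h) as [x hx]. exists x; left; auto.
    - destruct (Gt (g 1) (J k) (Gn 1) (HJ1 k h)) as [x hx]. exists x; right; auto. }
  assert (ERdom : forall k x, ER k x -> Dom M x).
  { intros k x [[_ h]|[_ h]]; apply (Gc _ _ _ h). }
  assert (ERinj : forall k k' x, ER k x -> ER k' x -> k = k').
  { intros k k' x [[a1 h1]|[a1 h1]] [[a2 h2]|[a2 h2]];
      destruct (Gi _ _ _ _ _ h1 h2) as [e1 e2].
    - auto.
    - apply Hg in e1; discriminate.
    - apply Hg in e1; discriminate.
    - apply HJ2; auto. }
  set (Rel := fun (p : K * K) c => exists x1 x2, ER (fst p) x1 /\ ER (snd p) x2 /\ M ((x1, x2), c)).
  assert (Hex : forall p, exists c, Rel p c).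
  { intros [k1 k2]. destruct (ERex k1) as [x1 h1]. destruct (ERex k2) as [x2 h2].
    destruct (Gt x1 x2) as [c hc]; eauto. exists c, x1, x2. auto. }
  exists (fun p => proj1_sig (constructive_indefinite_description _ (Hex p))).
  intros p q E.
  destruct (constructive_indefinite_description _ (Hex p)) as [c1 [x1 [x2 [a1 [a2 a3]]]]].
  destruct (constructive_indefinite_description _ (Hex q)) as [c2 [y1 [y2 [b1 [b2 b3]]]]].
  simpl in E. subst c2. destruct (Gi _ _ _ _ _ a3 b3) as [e1 e2]. subst.
  destruct p as [p1 p2], q as [q1 q2]; simpl in *.
  rewrite (ERinj _ _ _ a1 b1), (ERinj _ _ _ a2 b2). reflexivity.
Qed.

Lemma ext_case {K : Type} (g : nat -> K) (Hg : injective g) (M : (K * K) * K -> Prop)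
  (GM : Good g M) (H : K -> K)
  (HH1 : forall k, Dom M k -> ~ Dom M (H k))
  (HH2 : forall k k', Dom M k -> Dom M k' -> H k = H k' -> k = k') :
  exists R, Good g R /\ sub M R /\ ~ sub R M.
Proof.
  destruct GM as [Gf [Gi [Gc [Gt Gn]]]].
  set (A := Dom M) in *.
  set (tag := fun p q : K => if excluded_middle_informative (A p) then g 0
              else if excluded_middle_informative (A q) then g 1 else g 2).
  assert (tagA : forall p q, A (tag p q)).
  { intros p q; unfold tag. destruct excluded_middle_informative; auto.
    destruct excluded_middle_informative; auto. }
  assert (tagE : forall p1 q1 p2 q2, ~ (A p1 /\ A q1) -> ~ (A p2 /\ A q2) ->
            tag p1 q1 = tag p2 q2 -> (A p1 <-> A p2) /\ (A q1 <-> A q2)).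
  { intros p1 q1 p2 q2 n1 n2; unfold tag.
    destruct (excluded_middle_informative (A p1)); destruct (excluded_middle_informative (A p2));
    try destruct (excluded_middle_informative (A q1)); try destruct (excluded_middle_informative (A q2));
    intro E; try (apply Hg in E; discriminate); tauto. }
  set (Lf := fun x x' => A x' /\ (x = x' \/ x = H x')).
  assert (LfA : forall x x', Lf x x' -> (A x <-> x = x')).
  { intros x x' [h [e|e]]; subst; split; intro h2; auto.
    all: try (exfalso; eapply HH1; eauto; fail).
    - exfalso; exact (HH1 x' h h2).
    - rewrite h2; exact h. }
  assert (Lfu : forall x x1 x2, Lf x x1 -> Lf x x2 -> x1 = x2).
  { intros x x1 x2 h1 h2. destruct (classic (A x)) as [a|a].
    - pose proof (proj1 (LfA _ _ h1) a). pose proof (proj1 (LfA _ _ h2) a). congruence.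
    - destruct h1 as [b1 [e1|e1]]; [subst; contradiction|].
      destruct h2 as [b2 [e2|e2]]; [subst; contradiction|].
      apply HH2; congruence. }
  assert (Lfi : forall x1 x2 x', Lf x1 x' -> Lf x2 x' -> (A x1 <-> A x2) -> x1 = x2).
  { intros x1 x2 x' h1 h2 E. destruct (classic (A x1)) as [a|a].
    - rewrite (proj1 (LfA _ _ h1) a). symmetry. apply (LfA _ _ h2). tauto.
    - destruct h1 as [b1 [e1|e1]]; [subst; contradiction|].
      destruct h2 as [b2 [e2|e2]]; [subst; tauto|]. congruence. }
  set (New := fun u : (K * K) * K => match u with ((p, q), c) =>
     ~ (A p /\ A q) /\ exists p' q' e d, Lf p p' /\ Lf q q' /\ M ((p', q'), e) /\
       M ((tag p q, e), d) /\ c = H d end).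
  set (R := fun u => M u \/ New u).
  set (B := fun x => A x \/ exists a, A a /\ x = H a).
  assert (BLf : forall x, B x -> exists x', Lf x x').
  { intros x [a|[a [ha e]]]. exists x; split; auto. exists a; split; auto. }
  assert (E1 : forall p q, B p -> B q -> exists c, R ((p, q), c)).
  { intros p q bp bq. destruct (classic (A p /\ A q)) as [[ap aq]|n].
    - destruct (Gt p q ap aq) as [c hc]. exists c; left; auto.
    - destruct (BLf p bp) as [p' hp]. destruct (BLf q bq) as [q' hq].
      destruct (Gt p' q' (proj1 hp) (proj1 hq)) as [e he].
      destruct (Gt (tag p q) e (tagA p q)) as [d hd]. apply (Gc _ _ _ he).
      exists (H d). right. split; auto. exists p', q', e, d. auto. }
  assert (E2 : forall p q c, R ((p, q), c) -> B p /\ B q /\ B c).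
  { intros p q c [h|[n [p' [q' [e [d [h1 [h2 [h3 [h4 h5]]]]]]]]]].
    - destruct (Gc _ _ _ h) as [x1 [x2 x3]]. unfold B; auto.
    - assert (Bl : forall x x', Lf x x' -> B x).
      { intros x x' [a [ex|ex]]; subst; unfold B; eauto. }
      split; [eauto|split; [eauto|]]. right. exists d. split; auto.
      apply (Gc _ _ _ h4). }
  assert (DomR : forall x, Dom R x <-> B x).
  { intro x; split.
    - intros [c hc]. apply (E2 _ _ _ hc).
    - intro b. apply E1; auto. }
  assert (MA : forall p q c, M ((p, q), c) -> A p /\ A q /\ A c) by (intros; apply Gc; auto).
  exists R. split; [|split].
  - split; [|split; [|split; [|split]]].
    + intros a b c c' [h|h] [h'|h'].
      * eauto.
      * destruct h' as [n _]. exfalso; apply n. destruct (MA _ _ _ h) as [x [y _]]; auto.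
      * destruct h as [n _]. exfalso; apply n. destruct (MA _ _ _ h') as [x [y _]]; auto.
      * destruct h as [_ [p1 [q1 [e1 [d1 [a1 [a2 [a3 [a4 a5]]]]]]]]].
        destruct h' as [_ [p2 [q2 [e2 [d2 [b1 [b2 [b3 [b4 b5]]]]]]]]].
        rewrite (Lfu _ _ _ a1 b1), (Lfu _ _ _ a2 b2) in a3.
        rewrite (Gf _ _ _ _ a3 b3) in a4. subst. f_equal. eauto.
    + intros a b c a' b' [h|h] [h'|h'].
      * eauto.
      * destruct h' as [_ [p2 [q2 [e2 [d2 [b1 [b2 [b3 [b4 b5]]]]]]]]].
        destruct (MA _ _ _ h) as [_ [_ x]]. subst c. exfalso; eapply HH1; [|exact x].
        apply (MA _ _ _ b4).
      * destruct h as [_ [p2 [q2 [e2 [d2 [b1 [b2 [b3 [b4 b5]]]]]]]]].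
        destruct (MA _ _ _ h') as [_ [_ x]]. subst c. exfalso; eapply HH1; [|exact x].
        apply (MA _ _ _ b4).
      * destruct h as [n1 [p1 [q1 [e1 [d1 [a1 [a2 [a3 [a4 a5]]]]]]]]].
        destruct h' as [n2 [p2 [q2 [e2 [d2 [b1 [b2 [b3 [b4 b5]]]]]]]]].
        assert (d1 = d2).
        { apply HH2; [apply (MA _ _ _ a4)|apply (MA _ _ _ b4)|congruence]. }
        subst d2. destruct (Gi _ _ _ _ _ a4 b4) as [t e]. subst e2.
        destruct (Gi _ _ _ _ _ a3 b3) as [x y]. subst p2 q2.
        destruct (tagE _ _ _ _ n1 n2 t) as [i1 i2].
        split; eapply Lfi; eauto.
    + intros a b c hc. destruct (E2 _ _ _ hc) as [x [y z]].
      repeat split; apply DomR; auto.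
    + intros a b ha hb. apply E1; apply DomR; auto.
    + intro n. apply DomR. left. apply Gn.
  - intros u hu; left; auto.
  - intro S. destruct (E1 (H (g 0)) (H (g 0))) as [c hc].
    + right; exists (g 0); split; auto.
    + right; exists (g 0); split; auto.
    + apply S in hc. apply (HH1 (g 0) (Gn 0)). exists c; auto.
Qed.

Lemma sig_inj {A : Type} {P : A -> Prop} (a b : {x | P x}) : proj1_sig a = proj1_sig b -> a = b.
Proof. destruct a, b; simpl; intros; subst; f_equal; apply proof_irrelevance. Qed.

Lemma KKthm {K : Type} (g : nat -> K) (Hg : injective g) : exists F : K * K -> K, injective F.
Proof.
  Opaque to_nat.
  set (R0 := fun u : (K * K) * K => exists n m, u = ((g n, g m), g (to_nat (n, m)))).
  assert (D0 : forall a, Dom R0 a <-> exists n, a = g n).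
  { intro a; split.
    - intros [c [n [m e]]]. injection e; intros; eauto.
    - intros [n e]. subst. exists (g (to_nat (n, n))), n, n. reflexivity. }
  assert (G0 : Good g R0).
  { split; [|split; [|split; [|split]]].
    - intros a b c c' [n [m e]] [n' [m' e']].
      injection e as e1 e2 e3. injection e' as e1' e2' e3'. subst.
      apply Hg in e1'; apply Hg in e2'. subst. reflexivity.
    - intros a b c a' b' [n [m e]] [n' [m' e']].
      injection e as e1 e2 e3. injection e' as e1' e2' e3'. subst.
      apply Hg in e3'. assert (E := f_equal of_nat e3'). rewrite !cancel_of_to in E.
      injection E; intros; subst. auto.
    - intros a b c [n [m e]]. injection e; intros; subst.
      repeat split; apply D0; eauto.
    - intros a b ha hb. apply D0 in ha as [n ha]. apply D0 in hb as [m hb].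
      subst. exists (g (to_nat (n, m))), n, m. reflexivity.
    - intro n. apply D0. eauto. }
  destruct (zorn (fun R => Good g R \/ forall u, ~ R u)) as [M [HM Hmax]].
  { intros; apply good_union; auto. }
  assert (GM : Good g M).
  { destruct HM as [HM|HM]; auto. exfalso.
    assert (S := Hmax R0 (or_introl G0) (fun u hu => False_ind _ (HM u hu))).
    apply (HM ((g 0, g 0), g (to_nat (0, 0)))). apply S. exists 0, 0. reflexivity. }
  destruct (compar {k | ~ Dom M k} {k | Dom M k}) as [[j Hj] | [h Hh]].
  - set (J := fun k => match excluded_middle_informative (Dom M k) with
                       | left _ => k | right hk => proj1_sig (j (exist _ k hk)) end).
    apply (final_case g Hg M GM J).
    + intros k hk. unfold J. destruct excluded_middle_informative; [contradiction|].
      apply proj2_sig.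
    + intros k k' hk hk'. unfold J.
      destruct excluded_middle_informative; [contradiction|].
      destruct excluded_middle_informative; [contradiction|].
      intro E. apply sig_inj in E. apply Hj in E.
      injection E; auto.
  - set (H := fun k => match excluded_middle_informative (Dom M k) with
                       | right _ => k | left hk => proj1_sig (h (exist _ k hk)) end).
    destruct (ext_case g Hg M GM H) as [R [GR [s1 s2]]].
    + intros k hk. unfold H. destruct excluded_middle_informative; [|contradiction].
      apply proj2_sig.
    + intros k k' hk hk'. unfold H.
      destruct excluded_middle_informative; [|contradiction].
      destruct excluded_middle_informative; [|contradiction].
      intro E. apply sig_inj in E. apply Hh in E.
      injection E; auto.
    + exfalso. apply s2. apply Hmax; auto.
Qed.

Lemma C_rel {T K : Type} (B : (T -> Prop) -> Prop) (Rel : (T -> Prop) -> K -> Prop) :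
  (forall V, B V -> exists k, Rel V k) ->
  (forall V V' k, B V -> B V' -> Rel V k -> Rel V' k -> V = V') ->
  fam_card_le B K.
Proof.
  intros Ht Hi.
  exists (fun b => proj1_sig (constructive_indefinite_description _ (Ht _ (proj2_sig b)))).
  intros a b E. apply sig_inj.
  destruct (constructive_indefinite_description _ (Ht _ (proj2_sig a))) as [ka ha].
  destruct (constructive_indefinite_description _ (Ht _ (proj2_sig b))) as [kb hb].
  simpl in E; subst. eapply Hi; [exact (proj2_sig a)|exact (proj2_sig b)|eauto|eauto].
Qed.

Lemma C_empty {T K : Type} : fam_card_le (fun _ : T -> Prop => False) K.
Proof. apply (C_rel _ (fun _ _ => True)); intros; contradiction. Qed.

Lemma C_single {T K : Type} (HK : infinite_type K) (U0 : T -> Prop) :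
  fam_card_le (fun U => U = U0) K.
Proof.
  destruct HK as [g _]. apply (C_rel _ (fun _ k => k = g 0)).
  - eauto.
  - intros; congruence.
Qed.

Lemma C_img {S T K : Type} (A : (S -> Prop) -> Prop) (B : (T -> Prop) -> Prop)
  (phi : (S -> Prop) -> (T -> Prop)) :
  fam_card_le A K -> (forall V, B V -> exists U, A U /\ V = phi U) -> fam_card_le B K.
Proof.
  intros [f Hf] H.
  apply (C_rel _ (fun V k => exists U (hU : A U), V = phi U /\ k = f (exist _ U hU))).
  - intros V hV. destruct (H V hV) as [U [hU e]]. exists (f (exist _ U hU)), U, hU. auto.
  - intros V V' k _ _ [U [hU [e1 e2]]] [U' [hU' [e1' e2']]]. subst.
    apply Hf in e2'. injection e2'; intros; subst; auto.
Qed.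

Lemma C_inj {S T K : Type} (A : (S -> Prop) -> Prop) (B : (T -> Prop) -> Prop)
  (phi : (T -> Prop) -> (S -> Prop)) :
  fam_card_le A K -> (forall W, B W -> A (phi W)) ->
  (forall W1 W2, B W1 -> B W2 -> phi W1 = phi W2 -> W1 = W2) -> fam_card_le B K.
Proof.
  intros [f Hf] H1 H2.
  apply (C_rel _ (fun W k => exists h : A (phi W), k = f (exist _ (phi W) h))).
  - intros W hW. exists (f (exist _ _ (H1 W hW))), (H1 W hW). auto.
  - intros V V' k b b' [h e] [h' e']. subst. apply Hf in e'.
    injection e'; intros. auto.
Qed.

Lemma C_union {T K : Type} (HK : infinite_type K) (A B : (T -> Prop) -> Prop) :
  fam_card_le A K -> fam_card_le B K -> fam_card_le (fun U => A U \/ B U) K.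
Proof.
  intros [fA hA] [fB hB]. destruct HK as [g Hg].
  destruct (KKthm g Hg) as [F HF].
  apply (C_rel _ (fun V k => (exists h : A V, k = F (g 0, fA (exist _ V h))) \/
                             (~ A V /\ exists h : B V, k = F (g 1, fB (exist _ V h))))).
  - intros V [a|b].
    + exists (F (g 0, fA (exist _ V a))). left. exists a. auto.
    + destruct (classic (A V)) as [a|n].
      * exists (F (g 0, fA (exist _ V a))). left. exists a. auto.
      * exists (F (g 1, fB (exist _ V b))). right. split; auto. exists b. auto.
  - intros V V' k _ _ [[h e]|[n [h e]]] [[h' e']|[n' [h' e']]]; subst; apply HF in e';
      injection e'; intros.
    + apply hA in H. injection H; auto.
    + apply Hg in H0; discriminate.
    + apply Hg in H0; discriminate.
    + apply hB in H. injection H; auto.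
Qed.

Lemma C_bigunion {T K : Type} (HK : infinite_type K) (P : (T -> Prop) -> Prop)
  (Dfam : (T -> Prop) -> (T -> Prop) -> Prop) :
  fam_card_le P K -> (forall V, P V -> fam_card_le (Dfam V) K) ->
  fam_card_le (fun U => exists V, P V /\ Dfam V U) K.
Proof.
  intros [fP hP] HD. destruct HK as [g Hg].
  destruct (KKthm g Hg) as [F HF].
  set (fsel := fun V => epsilon (inhabits (fun _ : {U | Dfam V U} => g 0))
                          (fun f => forall a b, f a = f b -> a = b)).
  assert (Hs : forall V, P V -> forall a b, fsel V a = fsel V b -> a = b).
  { intros V hV. exact (epsilon_spec _ (fun f : {U | Dfam V U} -> K => forall a b, f a = f b -> a = b) (HD V hV)). }
  apply (C_rel _ (fun U k => exists V (hV : P V) (hU : Dfam V U),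
                     k = F (fP (exist _ V hV), fsel V (exist _ U hU)))).
  - intros U [V [hV hU]]. eexists. exists V, hV, hU. reflexivity.
  - intros U U' k _ _ [V [hV [hU e]]] [V' [hV' [hU' e']]]. subst.
    apply HF in e'. injection e'; intros e1 e2.
    apply hP in e2. injection e2; intros; subst.
    apply (Hs V' hV') in e1. injection e1; auto.
Qed.

Theorem lemma2p1 (T : Type) (op : (T -> Prop) -> Prop)
  (Htop : is_topology op) (HT2 : hausdorff op)
  (K : Type) (HK : infinite_type K) :
  (forall x : T, lindelof_le (subspace_open op (fun y => y <> x)) K) <->
  (lindelof_le op K /\ pseudochar_le op K).
Proof.
  split.
  - intro H. split.
    +
      intros C HC Hcov. destruct (classic (exists x0 : T, True)) as [[x0 _]|Hn].
      2:{ exists (fun _ => False). split; [tauto|split].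
          - intro x; exfalso; apply Hn; eauto.
          - apply C_empty. }
      destruct (Hcov x0) as [U0 [hU0 hx0]].
      set (C' := fun W : {y : T | y <> x0} -> Prop =>
                   exists U, C U /\ forall z, W z <-> U (proj1_sig z)).
      destruct (H x0 C') as [D' [HD1 [HD2 HD3]]].
      { intros W [U [hU e]]. exists U. split; auto. }
      { intro z. destruct (Hcov (proj1_sig z)) as [U [hU hz]].
        exists (fun w => U (proj1_sig w)). split; auto. exists U. split; auto. tauto. }
      set (phi := fun W : {y : T | y <> x0} -> Prop => epsilon (inhabits U0)
                    (fun U => C U /\ forall z, W z <-> U (proj1_sig z))).
      assert (Hphi : forall W, C' W -> C (phi W) /\ forall z, W z <-> phi W (proj1_sig z)).
      { intros W hW. exact (epsilon_spec _ (fun U => C U /\ forall z, W z <-> U (proj1_sig z)) hW). }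
      exists (fun U => U = U0 \/ exists W, D' W /\ U = phi W). split; [|split].
      * intros U [e|[W [hW e]]]; subst; auto. apply Hphi; auto.
      * intro x. destruct (classic (x = x0)) as [e|n].
        -- subst. exists U0. auto.
        -- destruct (HD2 (exist _ x n)) as [W [hW hz]].
           exists (phi W). split; eauto. apply (proj2 (Hphi W (HD1 W hW)) (exist _ x n)). auto.
      * apply C_union; auto. apply C_single; auto.
        apply (C_img D' _ phi HD3). intros V [W [hW e]]. eauto.
    +
      intro x.
      set (C' := fun W : {y : T | y <> x} -> Prop =>
                   exists V U, op V /\ op U /\ U x /\ (forall z, U z -> V z -> False) /\
                   forall z, W z <-> V (proj1_sig z)).
      destruct (H x C') as [D' [HD1 [HD2 HD3]]].
      { intros W [V [U [hV [_ [_ [_ e]]]]]]. exists V. split; auto. }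
      { intro z. destruct (HT2 (proj1_sig z) x (proj2_sig z)) as [U1 [V1 [h1 [h2 [h3 [h4 h5]]]]]].
        exists (fun w => U1 (proj1_sig w)). split; auto.
        exists U1, V1. repeat split; auto. intros w a b; exact (h5 w b a). }
      set (Pp := fun (W : {y : T | y <> x} -> Prop) U => op U /\ U x /\ exists V, op V /\
                    (forall z, U z -> V z -> False) /\ forall z, W z <-> V (proj1_sig z)).
      set (phi := fun W => epsilon (inhabits (fun _ : T => True)) (Pp W)).
      assert (Hphi : forall W, C' W -> Pp W (phi W)).
      { intros W [V [U [hV [hU [hx [hd e]]]]]]. apply (epsilon_spec _ (Pp W)).
        exists U. repeat split; auto. exists V. auto. }
      exists (fun U => exists W, D' W /\ U = phi W). split; [|split].
      * intros U [W [hW e]]. subst. destruct (Hphi W (HD1 W hW)) as [a [b _]]. auto.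
      * intros y Hy. apply NNPP; intro n.
        destruct (HD2 (exist _ y n)) as [W [hW hz]].
        destruct (Hphi W (HD1 W hW)) as [_ [_ [V [_ [hd e]]]]].
        apply (hd y). apply Hy. eauto. apply (e (exist _ y n)). auto.
      * apply (C_img D' _ phi HD3). intros V [W [hW e]]. eauto.
  - intros [HL Hpsi] x C' HC' Hcov.
    destruct (Hpsi x) as [P [HP1 [HP2 HP3]]].
    set (Q := fun (W : {y : T | y <> x} -> Prop) U => op U /\ forall z, W z <-> U (proj1_sig z)).
    set (lift := fun W => epsilon (inhabits (fun _ : T => True)) (Q W)).
    assert (Hlift : forall W, C' W -> Q W (lift W)).
    { intros W hW. apply (epsilon_spec _ (Q W)). destruct (HC' W hW) as [U [hU e]].
      exists U; split; auto. }
    set (CV := fun V U => U = V \/ exists W, C' W /\ U = lift W).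
    set (good := fun V (D : (T -> Prop) -> Prop) => (forall U, D U -> CV V U) /\
                   (forall y, exists U, D U /\ U y) /\ fam_card_le D K).
    set (Dsel := fun V => epsilon (inhabits (fun _ : T -> Prop => False)) (good V)).
    assert (HD : forall V, P V -> good V (Dsel V)).
    { intros V hV. apply (epsilon_spec _ (good V)). apply HL.
      - intros U [e|[W [hW e]]]; subst. apply (HP1 V hV). apply (Hlift W hW).
      - intro y. destruct (classic (y = x)) as [e|n].
        + subst. exists V. split. left; auto. apply (HP1 V hV).
        + destruct (Hcov (exist _ y n)) as [W [hW hz]].
          exists (lift W). split. right; eauto. apply (proj2 (Hlift W hW) (exist _ y n)). auto. }
    exists (fun W => C' W /\ exists V, P V /\ Dsel V (lift W)). split; [|split].
    + intros W [h _]; auto.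
    + intro z. destruct z as [y n].
      assert (Hv : exists V, P V /\ ~ V y).
      { apply NNPP; intro h. apply n. apply HP2. intros U hU.
        apply NNPP; intro h2. apply h; eauto. }
      destruct Hv as [V [hV nV]].
      destruct (HD V hV) as [h1 [h2 h3]].
      destruct (h2 y) as [U [hU hy]].
      destruct (h1 U hU) as [e|[W [hW e]]].
      * subst; contradiction.
      * subst. exists W. split.
        -- split; auto. exists V; auto.
        -- apply (proj2 (Hlift W hW) (exist _ y n)). auto.
    + apply (C_inj (fun U => exists V, P V /\ Dsel V U) _ lift).
      * apply C_bigunion; auto. intros V hV. apply (HD V hV).
      * intros W [hW [V [hV h]]]. eauto.
      * intros W1 W2 [h1 _] [h2 _] e. apply functional_extensionality; intro z.
        apply propositional_extensionality.
        destruct (Hlift W1 h1) as [_ e1]. destruct (Hlift W2 h2) as [_ e2].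
        rewrite e1, e2, e. tauto.
Qed.
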